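(* Let $0<L,W<\infty$, $\tau=iW/L$, $N\in\mathbb{N}$, and let $R_N$ be any of $A_{N-1},B_N,B_N^\vee,C_N,C_N^\vee,BC_N,D_N$. For $\mathbf{z}=(z_1,\dots,z_N)\in\mathbb{C}^N$, $z_j=x_j+iy_j$, define $q(\mathbf{z})=q^{R_N}(\mathbf{z})=C^{R_N}(\mathbf{z})\,W^{R_N}(\mathbf{z}/L;\tau)$. Then for every $m=1,\dots,N$, $$q(\sigma_m(L)\mathbf{z})=\mathrm{sgn}_{(L)}\,q(\mathbf{z}),\qquad q(\sigma_m(iW)\mathbf{z})=\mathrm{sgn}_{(iW)}\,e^{-2\pi i\mathcal{N}x_m/L}\,q(\mathbf{z}),$$ where $\mathrm{sgn}_{(L)}=1$ for $R_N=A_{N-1}$ with $N$ odd, $B_N^\vee$, $C_N$, $D_N$, and $\mathrm{sgn}_{(L)}=-1$ for $R_N=A_{N-1}$ with $N$ even, $B_N$, $C_N^\vee$, $BC_N$; and $\mathrm{sgn}_{(iW)}=1$ for $R_N=A_{N-1},C_N,C_N^\vee,BC_N,D_N$, $\mathrm{sgn}_{(iW)}=-1$ for $R_N=B_N,B_N^\vee$.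
   Context: Jacobi theta functions: for $v\in\mathbb{C}$, $\tau$ with $\Im\tau>0$, $q_0=e^{\pi i\tau}$: $\vartheta_0(v;\tau)=\sum_{n\in\mathbb{Z}}(-1)^nq_0^{n^2}e^{2\pi inv}$, $\vartheta_1(v;\tau)=i\sum_{n\in\mathbb{Z}}(-1)^nq_0^{(n-1/2)^2}e^{(2n-1)\pi iv}$, $\vartheta_2(v;\tau)=\sum_{n\in\mathbb{Z}}q_0^{(n-1/2)^2}e^{(2n-1)\pi iv}$, $\vartheta_3(v;\tau)=\sum_{n\in\mathbb{Z}}q_0^{n^2}e^{2\pi inv}$. The integer $\mathcal{N}=\mathcal{N}^{R_N}$ is: $N$ for $A_{N-1}$; $2N-1$ for $B_N$; $2N$ for $B_N^\vee,C_N^\vee$; $2(N+1)$ for $C_N$; $2N+1$ for $BC_N$; $2(N-1)$ for $D_N$. Macdonald denominators, for $\boldsymbol\xi\in\mathbb{C}^N$, with $P(\boldsymbol\xi)=\prod_{1\le j<k\le N}\vartheta_1(\xi_k-\xi_j;\tau)\vartheta_1(\xi_k+\xi_j;\tau)$: $W^{A_{N-1}}=\prod_{j<k}\vartheta_1(\xi_k-\xi_j;\tau)$; $W^{B_N}=\prod_\ell\vartheta_1(\xi_\ell;\tau)P$; $W^{B_N^\vee}=\prod_\ell\vartheta_1(2\xi_\ell;2\tau)P$; $W^{C_N}=\prod_\ell\vartheta_1(2\xi_\ell;\tau)P$; $W^{C_N^\vee}=\prod_\ell\vartheta_1(\xi_\ell;\tau/2)P$; $W^{BC_N}=\prod_\ell\vartheta_1(\xi_\ell;\tau)\vartheta_0(2\xi_\ell;2\tau)P$;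 $W^{D_N}=P$. Let $s(N)=0$ if $N$ is even and $s(N)=3$ if $N$ is odd. Define $C^{A_{N-1}}(\mathbf{z})=\exp(-\frac{\pi\mathcal{N}}{LW}\sum_j y_j^2)\,\vartheta_{s(N)}(\sum_k z_k/L;\tau)$ and $C^{R_N}(\mathbf{z})=\exp(-\frac{\pi\mathcal{N}}{LW}\sum_j y_j^2)$ for the other six types. $\mathbf{z}/L=(z_1/L,\dots,z_N/L)$. The shift operator $\sigma_m(w)$ replaces $z_m$ by $z_m+w$ and leaves the other coordinates unchanged. *)

(* Defs.v *)
From Stdlib Require Import Reals List.
From Coquelicot Require Import Coquelicot.
Import ListNotations.
Open Scope R_scope.

Definition cexp (z : C) : C :=
  (exp (Re z) * cos (Im z), exp (Re z) * sin (Im z)).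

(* bilateral sum over Z: limit (in C) of the symmetric partial sums
   sum_{n=-M}^{M} f n as M -> oo (the theta series converge absolutely) *)
Definition zpartial (f : Z -> C) (M : nat) : C :=
  fold_right Cplus (RtoC 0)
    (map (fun k : nat => f (Z.of_nat k - Z.of_nat M)%Z) (seq 0 (2 * M + 1))).

Definition zsum (f : Z -> C) : C :=
  lim (T := C_CompleteNormedModule) (filtermap (zpartial f) eventually).

Open Scope C_scope.
Definition sgnZ (n : Z) : C := if Z.even n then RtoC 1 else RtoC (-1).

Definition pi_i : C := (0, PI).

(* q_0^{a} with q_0 = e^{pi i tau}: written as exp(pi i tau a) *)
Definition theta0 (v tau : C) : C :=
  zsum (fun n => sgnZ n * cexp (pi_i * tau * RtoC (IZR n ^ 2)
                                + RtoC 2 * pi_i * RtoC (IZR n) * v)).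
Definition theta1 (v tau : C) : C :=
  Ci * zsum (fun n => sgnZ n * cexp (pi_i * tau * RtoC ((IZR n - /2) ^ 2)
                                + RtoC (2 * IZR n - 1) * pi_i * v)).
Definition theta2 (v tau : C) : C :=
  zsum (fun n => cexp (pi_i * tau * RtoC ((IZR n - /2) ^ 2)
                        + RtoC (2 * IZR n - 1) * pi_i * v)).
Definition theta3 (v tau : C) : C :=
  zsum (fun n => cexp (pi_i * tau * RtoC (IZR n ^ 2)
                        + RtoC 2 * pi_i * RtoC (IZR n) * v)).

(* the seven root systems: A_{N-1}, B_N, B_N^vee, C_N, C_N^vee, BC_N, D_N *)
Inductive RootSys := RA | RB | RBv | RC | RCv | RBC | RD.

Open Scope R_scope.
Definition calN (RS : RootSys) (N : nat) : R :=
  match RS with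
  | RA => INR N
  | RB => 2 * INR N - 1
  | RBv | RCv => 2 * INR N
  | RC => 2 * (INR N + 1)
  | RBC => 2 * INR N + 1
  | RD => 2 * (INR N - 1)
  end.

(* vectors in C^N are functions nat -> C, coordinates 1..N stored at 0..N-1 *)
Open Scope C_scope.
Definition cprod (l : list nat) (f : nat -> C) : C :=
  fold_right Cmult (RtoC 1) (map f l).
Definition csum (l : list nat) (f : nat -> C) : C :=
  fold_right Cplus (RtoC 0) (map f l).
Open Scope R_scope.
Definition rsum (l : list nat) (f : nat -> R) : R :=
  fold_right Rplus 0 (map f l).

Open Scope C_scope.
Definition pairprod (N : nat) (f : nat -> nat -> C) : C :=
  cprod (seq 0 N) (fun k => cprod (seq 0 k) (fun j => f j k)).

Definition Pfun (N : nat) (xi : nat -> C) (tau : C) : C :=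
  pairprod N (fun j k => theta1 (xi k - xi j) tau * theta1 (xi k + xi j) tau).

Definition Wden (RS : RootSys) (N : nat) (xi : nat -> C) (tau : C) : C :=
  match RS with
  | RA => pairprod N (fun j k => theta1 (xi k - xi j) tau)
  | RB => cprod (seq 0 N) (fun l => theta1 (xi l) tau) * Pfun N xi tau
  | RBv => cprod (seq 0 N) (fun l => theta1 (RtoC 2 * xi l) (RtoC 2 * tau)) * Pfun N xi tau
  | RC => cprod (seq 0 N) (fun l => theta1 (RtoC 2 * xi l) tau) * Pfun N xi tau
  | RCv => cprod (seq 0 N) (fun l => theta1 (xi l) (tau / RtoC 2)) * Pfun N xi tau
  | RBC => cprod (seq 0 N) (fun l => theta1 (xi l) tau * theta0 (RtoC 2 * xi l) (RtoC 2 * tau))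
             * Pfun N xi tau
  | RD => Pfun N xi tau
  end.

Definition Cfac (RS : RootSys) (N : nat) (L W : R) (z : nat -> C) (tau : C) : C :=
  let g := RtoC (exp (- (PI * calN RS N / (L * W)) * rsum (seq 0 N) (fun j => Im (z j) ^ 2))%R) in
  match RS with
  | RA => g * (if Nat.even N then theta0 (csum (seq 0 N) z / RtoC L) tau
                             else theta3 (csum (seq 0 N) z / RtoC L) tau)
  | _ => g
  end.

Definition qfun (RS : RootSys) (N : nat) (L W : R) (z : nat -> C) : C :=
  let tau : C := (0%R, (W / L)%R) in
  Cfac RS N L W z tau * Wden RS N (fun j => z j / RtoC L) tau.

(* sigma_m(w): shift coordinate m (0-based index) by w *)
Definition shift (m : nat) (w : C) (z : nat -> C) : nat -> C :=
  fun j => if Nat.eqb j m then z j + w else z j.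

Definition sgnL (RS : RootSys) (N : nat) : C :=
  match RS with
  | RA => if Nat.even N then RtoC (-1) else RtoC 1
  | RBv | RC | RD => RtoC 1
  | RB | RCv | RBC => RtoC (-1)
  end.

Definition sgniW (RS : RootSys) : C :=
  match RS with
  | RB | RBv => RtoC (-1)
  | _ => RtoC 1
  end.

(* Main.v *)
Require Import Defs.
From Stdlib Require Import Reals List Lia Lra Psatz ZArith FunctionalExtensionality.
From Coquelicot Require Import Coquelicot.
Import ListNotations.
Open Scope R_scope.
Open Scope C_scope.

Lemma fold_Cplus_acc (l : list C) (a : C) : fold_right Cplus a l = fold_right Cplus 0 l + a.
Proof. induction l; simpl. ring. rewrite IHl. ring. Qed.

Lemma zpartial_S f M : zpartial f (S M) = f (-(Z.of_nat M + 1))%Z + zpartial f M + f (Z.of_nat M + 1)%Z.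
Proof.
  unfold zpartial.
  replace (2 * S M + 1)%nat with (S (S (2 * M + 1)))%nat by lia.
  assert (E : forall n, seq 0 (S n) = 0%nat :: seq 1 n) by reflexivity.
  rewrite E, seq_S, <- seq_shift, map_cons, map_app, map_map.
  change (fold_right Cplus 0 (?a :: ?l)) with (a + fold_right Cplus 0 l).
  rewrite fold_right_app.
  assert (Hl : forall (g : nat -> C) x, fold_right Cplus 0 (map g [x]) = g x + 0) by reflexivity.
  rewrite Hl.
  rewrite fold_Cplus_acc.
  replace (Z.of_nat 0 - Z.of_nat (S M))%Z with (-(Z.of_nat M + 1))%Z by lia.
  replace (Z.of_nat (1 + (2 * M + 1)) - Z.of_nat (S M))%Z with (Z.of_nat M + 1)%Z by lia.
  rewrite (map_ext (fun x => f (Z.of_nat (S x) - Z.of_nat (S M))%Z) (fun k => f (Z.of_nat k - Z.of_nat M)%Z)).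
  ring.
  intros k. f_equal. lia.
Qed.

Definition dser (f : Z -> C) (k : nat) : C :=
  match k with O => f 0%Z | S k => f (Z.of_nat k + 1)%Z + f (-(Z.of_nat k + 1))%Z end.

Lemma zpartial_sum f M : zpartial f M = sum_n (dser f) M.
Proof.
  induction M.
  - rewrite sum_O. unfold zpartial. simpl. ring.
  - rewrite sum_Sn, zpartial_S, IHM. simpl. change plus with Cplus. ring.
Qed.

Lemma lim_eq (u : nat -> C) (l : C) :
  filterlim u eventually (locally l) -> lim (T := C_CompleteNormedModule) (filtermap u eventually) = l.
Proof.
  intros H.
  eapply (filterlim_locally_unique (F := eventually) u); [|exact H].
  apply filterlim_locally. intros eps.
  apply (complete_cauchy (T := C_CompleteNormedModule) (filtermap u eventually)).
  - apply filtermap_proper_filter. apply eventually_filter.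
  - intros e. exists l. apply (proj1 (filterlim_locally u l) H e).
Qed.

Lemma zsum_series f l : is_series (dser f) l -> zsum f = l.
Proof.
  intros H. unfold zsum.
  replace (zpartial f) with (sum_n (dser f)).
  apply lim_eq. exact H.
  apply functional_extensionality. intros; symmetry; apply zpartial_sum.
Qed.

Lemma zsum_split f la lb :
  is_series (fun k => f (Z.of_nat k + 1)%Z) la ->
  is_series (fun k => f (-(Z.of_nat k + 1))%Z) lb ->
  zsum f = f 0%Z + la + lb.
Proof.
  intros Ha Hb. apply zsum_series.
  apply is_series_decr_1.
  match goal with |- is_series _ ?L => replace L with (plus la lb) end.
  eapply is_series_ext; [|apply (is_series_plus _ _ _ _ Ha Hb)].
  - intros n. reflexivity.
  - simpl. change plus with Cplus. change opp with Copp. ring.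
Qed.


Definition gbound (f : Z -> C) : Prop :=
  exists a b c : R, (0 < a)%R /\ forall n, (Cmod (f n) <= exp (-a * IZR n ^ 2 + b * IZR n + c))%R.

Lemma exp_negINR k : exp (- INR k) = (exp (-1) ^ k)%R.
Proof. induction k. simpl. rewrite Ropp_0, exp_0. reflexivity.
  rewrite S_INR. replace (-(INR k + 1))%R with (-INR k + -1)%R by ring.
  rewrite exp_plus, IHk. simpl. ring. Qed.

Lemma quad_le (a b c y : R) : (0 < a)%R -> (0 <= y)%R ->
  (-a * y ^ 2 + b * y + c <= c + (b + 1) ^ 2 / (4 * a) - y)%R.
Proof. intros Ha Hy.
  assert (H : (0 <= (2 * a * y - (b + 1)) ^ 2 / (4 * a))%R).
  { apply Rdiv_le_0_compat. apply pow2_ge_0. lra. }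
  replace (c + (b + 1) ^ 2 / (4 * a) - y)%R with ((-a * y ^ 2 + b * y + c) + (2 * a * y - (b + 1)) ^ 2 / (4 * a))%R
   by (field; lra). lra. Qed.

Lemma exp_le_exp' (x y : R) : (x <= y)%R -> (exp x <= exp y)%R.
Proof. intros [H|H]. left; apply exp_increasing; auto. right; subst; auto. Qed.

Lemma geo_bound (a b c : R) (k : nat) : (0 < a)%R ->
  (exp (-a * (INR k + 1) ^ 2 + b * (INR k + 1) + c) <= exp (c + (b + 1) ^ 2 / (4 * a)) * exp (-1) ^ k)%R.
Proof. intros Ha. rewrite <- exp_negINR, <- exp_plus. apply exp_le_exp'.
  assert (H := quad_le a b c (INR k + 1) Ha). assert (H0 := pos_INR k). specialize (H ltac:(lra)). lra. Qed.

Lemma ex_geo (K : R) : ex_series (fun k => (exp K * exp (-1) ^ k)%R).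
Proof. apply (ex_series_scal_l (K := R_AbsRing) (V := R_NormedModule)).
  exists (/ (1 - exp (-1)))%R. apply is_series_geom.
  rewrite Rabs_pos_eq. rewrite <- exp_0. apply exp_increasing. lra. left; apply exp_pos. Qed.

Lemma gbound_series f : gbound f ->
  ex_series (fun k => f (Z.of_nat k + 1)%Z) /\ ex_series (fun k => f (-(Z.of_nat k + 1))%Z).
Proof. intros (a & b & c & Ha & Hf). split.
  - apply (ex_series_le (K := C_AbsRing) (V := C_CompleteNormedModule) _ (fun k => (exp (c + (b + 1) ^ 2 / (4 * a)) * exp (-1) ^ k)%R)); [|apply ex_geo].
    intros k. change norm with Cmod. eapply Rle_trans; [apply Hf|].
    rewrite plus_IZR, <- INR_IZR_INZ. apply geo_bound; auto.
  - apply (ex_series_le (K := C_AbsRing) (V := C_CompleteNormedModule) _ (fun k => (exp (c + (-b + 1) ^ 2 / (4 * a)) * exp (-1) ^ k)%R)); [|apply ex_geo].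
    intros k. change norm with Cmod. eapply Rle_trans; [apply Hf|].
    rewrite opp_IZR, plus_IZR, <- INR_IZR_INZ.
    replace (- a * (- (INR k + 1)) ^ 2 + b * - (INR k + 1) + c)%R with (- a * (INR k + 1) ^ 2 + (-b) * (INR k + 1) + c)%R by ring.
    apply geo_bound; auto.
Qed.

Lemma gbound_shift f : gbound f -> gbound (fun n => f (n + 1)%Z).
Proof. intros (a & b & c & Ha & Hf). exists a, (b - 2 * a)%R, (c - a + b)%R. split; auto.
  intros n. eapply Rle_trans; [apply Hf|]. rewrite plus_IZR. right. f_equal. ring. Qed.

Lemma zsum_shift f : gbound f -> zsum (fun n => f (n + 1)%Z) = zsum f.
Proof. intros Hg. destruct (gbound_series f Hg) as [[la Ha] [lb Hb]]. change C in la, lb.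
  rewrite (zsum_split f la lb Ha Hb).
  rewrite (zsum_split _ (la - f 1%Z) (lb + f 0%Z)).
  - replace (0 + 1)%Z with 1%Z by lia. ring.
  - eapply is_series_ext; [|apply (is_series_incr_1 (fun k => f (Z.of_nat k + 1)%Z))].
    + intros n. simpl. f_equal. lia.
    + match goal with |- is_series _ ?L => replace L with la end. exact Ha.
      simpl. change plus with Cplus. ring.
  - apply (is_series_decr_1 (fun k => f (-(Z.of_nat k + 1) + 1)%Z)).
    match goal with |- is_series _ ?L => replace L with lb end.
    + apply (is_series_ext (fun k => f (-(Z.of_nat k+1))%Z) (fun k => f (-(Z.of_nat (S k) + 1) + 1)%Z)); [|exact Hb].
      intros n. rewrite Nat2Z.inj_succ. f_equal. lia.
    + simpl. change plus with Cplus. change opp with Copp. replace (- 0 + 1)%Z with 1%Z by lia.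
      replace (0+1)%Z with 1%Z by lia. ring.
Qed.

Lemma zsum_scal f (c : C) : gbound f -> zsum (fun n => c * f n) = c * zsum f.
Proof. intros Hg. destruct (gbound_series f Hg) as [[la Ha] [lb Hb]]. change C in la, lb.
  rewrite (zsum_split f la lb Ha Hb).
  rewrite (zsum_split _ (c * la) (c * lb)).
  - ring.
  - apply (is_series_scal_l (K := C_AbsRing) (V := C_NormedModule) c _ _ Ha).
  - apply (is_series_scal_l (K := C_AbsRing) (V := C_NormedModule) c _ _ Hb).
Qed.


Ltac cdes := repeat match goal with x : C |- _ => destruct x end.
Ltac cunf := unfold Cplus, Cmult, Copp, Cminus, Cdiv, Cinv, RtoC, Re, Im, pi_i, Ci in *; simpl.
Ltac cpair := cdes; cunf; apply injective_projections; simpl.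

Lemma cexp_add (a b : C) : cexp (a + b) = cexp a * cexp b.
Proof. cdes; unfold cexp; cunf. rewrite exp_plus, cos_plus, sin_plus.
 apply injective_projections; simpl; ring. Qed.

Lemma cexp_0 : cexp 0 = 1.
Proof. unfold cexp; cunf. rewrite exp_0, cos_0, sin_0. apply injective_projections; simpl; ring. Qed.

Lemma cexp_opp (a : C) : cexp (- a) * cexp a = 1.
Proof. rewrite <- cexp_add. replace (-a + a) with (RtoC 0) by ring. apply cexp_0. Qed.

Lemma Cmod_cexp (z : C) : Cmod (cexp z) = exp (Re z).
Proof. cdes; unfold cexp, Cmod; simpl.
 assert (H := sin2_cos2 r0). unfold Rsqr in H.
 replace (exp r * cos r0 * (exp r * cos r0 * 1) + exp r * sin r0 * (exp r * sin r0 * 1))%R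
  with (exp r * exp r)%R by (transitivity (exp r * exp r * (sin r0 * sin r0 + cos r0 * cos r0))%R; [rewrite H; ring | ring]).
 apply sqrt_square. left; apply exp_pos. Qed.

Lemma cexp_R (r : R) : cexp (RtoC r) = RtoC (exp r).
Proof. unfold cexp; cunf. rewrite cos_0, sin_0. apply injective_projections; simpl; ring. Qed.

Lemma cexp_pi : cexp (0%R, PI) = RtoC (-1).
Proof. unfold cexp; cunf. rewrite cos_PI, sin_PI, exp_0. apply injective_projections; simpl; ring. Qed.

Lemma cexp_2pin (n : nat) : cexp (0%R, (2 * INR n * PI)%R) = 1.
Proof. unfold cexp; simpl. rewrite exp_0.
 replace (2 * INR n * PI)%R with (0 + 2 * INR n * PI)%R by ring.
 rewrite cos_period, sin_period, cos_0, sin_0. apply injective_projections; simpl; ring. Qed.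

Lemma cexp_2pik (k : Z) : cexp (0%R, (2 * IZR k * PI)%R) = 1.
Proof. destruct k as [|p|p].
 - simpl. replace (2*0*PI)%R with (2 * INR 0 * PI)%R by (simpl; ring). apply cexp_2pin.
 - rewrite <- (positive_nat_Z p), <- INR_IZR_INZ. apply cexp_2pin.
 - rewrite <- Pos2Z.opp_pos, opp_IZR, <- (positive_nat_Z p), <- INR_IZR_INZ.
   unfold cexp; simpl. rewrite exp_0.
   replace (2 * - INR (Pos.to_nat p) * PI)%R with (- (0 + 2 * INR (Pos.to_nat p) * PI))%R by ring.
   rewrite cos_neg, sin_neg, cos_period, sin_period, cos_0, sin_0. apply injective_projections; simpl; ring.
Qed.

Lemma RtoC_m1 : RtoC (-1) = - RtoC 1.
Proof. cunf. apply injective_projections; simpl; ring. Qed.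

Lemma sgnZ_succ n : sgnZ (n + 1) = - sgnZ n.
Proof. unfold sgnZ. rewrite Z.even_add. simpl. destruct (Z.even n); simpl; rewrite ?RtoC_m1; ring. Qed.

Lemma Cmod_sgnZ n : Cmod (sgnZ n) = 1%R.
Proof. unfold sgnZ. destruct (Z.even n); rewrite Cmod_R; rewrite ?Rabs_R1, ?Rabs_Ropp, ?Rabs_R1; auto.
  rewrite Rabs_m1; auto. Qed.


Definition T0 (v tau : C) (n : Z) : C := sgnZ n * cexp (pi_i * tau * RtoC (IZR n ^ 2)
                                + RtoC 2 * pi_i * RtoC (IZR n) * v).
Definition T1 (v tau : C) (n : Z) : C := sgnZ n * cexp (pi_i * tau * RtoC ((IZR n - /2) ^ 2)
                                + RtoC (2 * IZR n - 1) * pi_i * v).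
Definition T3 (v tau : C) (n : Z) : C := cexp (pi_i * tau * RtoC (IZR n ^ 2)
                        + RtoC 2 * pi_i * RtoC (IZR n) * v).

Lemma theta0_T v tau : theta0 v tau = zsum (T0 v tau). Proof. reflexivity. Qed.
Lemma theta1_T v tau : theta1 v tau = Ci * zsum (T1 v tau). Proof. reflexivity. Qed.
Lemma theta3_T v tau : theta3 v tau = zsum (T3 v tau). Proof. reflexivity. Qed.

Lemma gbound_T0 v tau : (0 < Im tau)%R -> gbound (T0 v tau).
Proof. intros Ht. destruct tau as [tr ti], v as [vr vi]. simpl in Ht.
  exists (PI * ti)%R, (- 2 * PI * vi)%R, 0%R. split. apply Rmult_lt_0_compat; auto. apply PI_RGT_0.
  intros n. unfold T0. rewrite Cmod_mult, Cmod_sgnZ, Cmod_cexp, Rmult_1_l. apply Req_le. f_equal.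
  cunf. ring. Qed.

Lemma gbound_T1 v tau : (0 < Im tau)%R -> gbound (T1 v tau).
Proof. intros Ht. destruct tau as [tr ti], v as [vr vi]. simpl in Ht.
  exists (PI * ti)%R, (PI * ti - 2 * PI * vi)%R, (- PI * ti / 4 + PI * vi)%R. split. apply Rmult_lt_0_compat; auto. apply PI_RGT_0.
  intros n. unfold T1. rewrite Cmod_mult, Cmod_sgnZ, Cmod_cexp, Rmult_1_l. apply Req_le. f_equal.
  cunf. field. Qed.

Lemma gbound_T3 v tau : (0 < Im tau)%R -> gbound (T3 v tau).
Proof. intros Ht. destruct tau as [tr ti], v as [vr vi]. simpl in Ht.
  exists (PI * ti)%R, (- 2 * PI * vi)%R, 0%R. split. apply Rmult_lt_0_compat; auto. apply PI_RGT_0.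
  intros n. unfold T3. rewrite Cmod_cexp. apply Req_le. f_equal.
  cunf. ring. Qed.

Lemma T1_p1 v tau n : T1 (v + 1) tau n = - (1) * T1 v tau n.
Proof. unfold T1.
  replace (pi_i * tau * RtoC ((IZR n - / 2) ^ 2) + RtoC (2 * IZR n - 1) * pi_i * (v + 1))
   with ((pi_i * tau * RtoC ((IZR n - / 2) ^ 2) + RtoC (2 * IZR n - 1) * pi_i * v) + (0%R, (2 * IZR (n - 1) * PI)%R) + (0%R, PI)).
  - rewrite !cexp_add, cexp_2pik, cexp_pi, RtoC_m1. ring.
  - rewrite minus_IZR. cpair; ring.
Qed.

Lemma T0_p1 v tau n : T0 (v + 1) tau n = T0 v tau n.
Proof. unfold T0.
  replace (pi_i * tau * RtoC (IZR n ^ 2) + RtoC 2 * pi_i * RtoC (IZR n) * (v + 1))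
   with ((pi_i * tau * RtoC (IZR n ^ 2) + RtoC 2 * pi_i * RtoC (IZR n) * v) + (0%R, (2 * IZR n * PI)%R)).
  - rewrite !cexp_add, cexp_2pik. ring.
  - cpair; ring.
Qed.

Lemma T3_p1 v tau n : T3 (v + 1) tau n = T3 v tau n.
Proof. unfold T3.
  replace (pi_i * tau * RtoC (IZR n ^ 2) + RtoC 2 * pi_i * RtoC (IZR n) * (v + 1))
   with ((pi_i * tau * RtoC (IZR n ^ 2) + RtoC 2 * pi_i * RtoC (IZR n) * v) + (0%R, (2 * IZR n * PI)%R)).
  - rewrite !cexp_add, cexp_2pik. ring.
  - cpair; ring.
Qed.

Lemma T1_tau v tau n : T1 (v + tau) tau n = - cexp (- (pi_i * tau) - RtoC 2 * pi_i * v) * T1 v tau (n + 1).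
Proof. unfold T1. rewrite sgnZ_succ.
  replace (pi_i * tau * RtoC ((IZR n - / 2) ^ 2) + RtoC (2 * IZR n - 1) * pi_i * (v + tau))
   with ((- (pi_i * tau) - RtoC 2 * pi_i * v) + (pi_i * tau * RtoC ((IZR (n + 1) - / 2) ^ 2) + RtoC (2 * IZR (n + 1) - 1) * pi_i * v)).
  - rewrite !cexp_add. ring.
  - rewrite plus_IZR. cpair; field.
Qed.

Lemma T0_tau v tau n : T0 (v + tau) tau n = - cexp (- (pi_i * tau) - RtoC 2 * pi_i * v) * T0 v tau (n + 1).
Proof. unfold T0. rewrite sgnZ_succ.
  replace (pi_i * tau * RtoC (IZR n ^ 2) + RtoC 2 * pi_i * RtoC (IZR n) * (v + tau))
   with ((- (pi_i * tau) - RtoC 2 * pi_i * v) + (pi_i * tau * RtoC (IZR (n + 1) ^ 2) + RtoC 2 * pi_i * RtoC (IZR (n + 1)) * v)).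
  - rewrite !cexp_add. ring.
  - rewrite plus_IZR. cpair; field.
Qed.

Lemma T3_tau v tau n : T3 (v + tau) tau n = cexp (- (pi_i * tau) - RtoC 2 * pi_i * v) * T3 v tau (n + 1).
Proof. unfold T3.
  replace (pi_i * tau * RtoC (IZR n ^ 2) + RtoC 2 * pi_i * RtoC (IZR n) * (v + tau))
   with ((- (pi_i * tau) - RtoC 2 * pi_i * v) + (pi_i * tau * RtoC (IZR (n + 1) ^ 2) + RtoC 2 * pi_i * RtoC (IZR (n + 1)) * v)).
  - rewrite !cexp_add. ring.
  - rewrite plus_IZR. cpair; field.
Qed.

Lemma theta1_p1 v tau : (0 < Im tau)%R -> theta1 (v + 1) tau = - theta1 v tau.
Proof. intros Ht. rewrite !theta1_T.
  replace (T1 (v + 1) tau) with (fun n => (- (1)) * T1 v tau n).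
  - rewrite zsum_scal by (apply gbound_T1; auto). ring.
  - apply functional_extensionality; intros n; rewrite T1_p1; auto.
Qed.

Lemma theta0_p1 v tau : theta0 (v + 1) tau = theta0 v tau.
Proof. rewrite !theta0_T. f_equal. apply functional_extensionality; intros n; apply T0_p1. Qed.

Lemma theta3_p1 v tau : theta3 (v + 1) tau = theta3 v tau.
Proof. rewrite !theta3_T. f_equal. apply functional_extensionality; intros n; apply T3_p1. Qed.

Lemma theta1_tau v tau : (0 < Im tau)%R ->
  theta1 (v + tau) tau = - cexp (- (pi_i * tau) - RtoC 2 * pi_i * v) * theta1 v tau.
Proof. intros Ht. rewrite !theta1_T.
  replace (T1 (v + tau) tau) with (fun n => (- cexp (- (pi_i * tau) - RtoC 2 * pi_i * v)) * T1 v tau (n + 1)%Z).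
  - rewrite zsum_scal by (apply gbound_shift, gbound_T1; auto).
    rewrite zsum_shift by (apply gbound_T1; auto). ring.
  - apply functional_extensionality; intros n; rewrite T1_tau; auto.
Qed.

Lemma theta0_tau v tau : (0 < Im tau)%R ->
  theta0 (v + tau) tau = - cexp (- (pi_i * tau) - RtoC 2 * pi_i * v) * theta0 v tau.
Proof. intros Ht. rewrite !theta0_T.
  replace (T0 (v + tau) tau) with (fun n => (- cexp (- (pi_i * tau) - RtoC 2 * pi_i * v)) * T0 v tau (n + 1)%Z).
  - rewrite zsum_scal by (apply gbound_shift, gbound_T0; auto).
    rewrite zsum_shift by (apply gbound_T0; auto). ring.
  - apply functional_extensionality; intros n; rewrite T0_tau; auto.
Qed.

Lemma theta3_tau v tau : (0 < Im tau)%R ->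
  theta3 (v + tau) tau = cexp (- (pi_i * tau) - RtoC 2 * pi_i * v) * theta3 v tau.
Proof. intros Ht. rewrite !theta3_T.
  replace (T3 (v + tau) tau) with (fun n => (cexp (- (pi_i * tau) - RtoC 2 * pi_i * v)) * T3 v tau (n + 1)%Z).
  - rewrite zsum_scal by (apply gbound_shift, gbound_T3; auto).
    rewrite zsum_shift by (apply gbound_T3; auto). ring.
  - apply functional_extensionality; intros n; rewrite T3_tau; auto.
Qed.

Lemma theta1_mtau v tau : (0 < Im tau)%R ->
  theta1 (v - tau) tau = - cexp (RtoC 2 * pi_i * v - pi_i * tau) * theta1 v tau.
Proof. intros Ht.
  assert (H := theta1_tau (v - tau) tau Ht).
  replace (v - tau + tau) with v in H by ring.
  replace (- (pi_i * tau) - RtoC 2 * pi_i * (v - tau)) with (- (RtoC 2 * pi_i * v - pi_i * tau)) in H by ring.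
  rewrite H. replace (- cexp (RtoC 2 * pi_i * v - pi_i * tau) * (- cexp (- (RtoC 2 * pi_i * v - pi_i * tau)) * theta1 (v - tau) tau))
    with ((cexp (- (RtoC 2 * pi_i * v - pi_i * tau)) * cexp (RtoC 2 * pi_i * v - pi_i * tau)) * theta1 (v - tau) tau) by ring.
  rewrite cexp_opp. ring.
Qed.


Fixpoint cpow (c : C) (n : nat) : C := match n with O => 1 | S n => c * cpow c n end.

Lemma cpow_cexp X n : cpow (cexp X) n = cexp (RtoC (INR n) * X).
Proof. induction n; simpl cpow.
  - replace (RtoC (INR 0) * X) with (RtoC 0) by (simpl; ring). rewrite cexp_0. reflexivity.
  - rewrite IHn, <- cexp_add. f_equal. rewrite S_INR, RtoC_plus. ring. Qed.

Lemma cpow_mult a b n : cpow (a * b) n = cpow a n * cpow b n.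
Proof. induction n; simpl. ring. rewrite IHn. ring. Qed.

Lemma cpow_1 n : cpow 1 n = 1.
Proof. induction n; simpl. auto. rewrite IHn. ring. Qed.

Lemma cpow_m1 n : cpow (- (1)) n = if Nat.even n then 1 else - (1).
Proof. induction n as [n IH] using (well_founded_induction lt_wf).
  destruct n as [|[|n]]; simpl; try ring.
  replace (- (1) * (- (1) * cpow (- (1)) n)) with (cpow (- (1)) n) by ring.
  apply IH. lia. Qed.

Lemma cprod_app l1 l2 f : cprod (l1 ++ l2) f = cprod l1 f * cprod l2 f.
Proof. induction l1; unfold cprod in *; simpl. ring. rewrite IHl1. ring. Qed.

Lemma cprod_S N f : cprod (seq 0 (S N)) f = cprod (seq 0 N) f * f N.
Proof. rewrite seq_S, cprod_app. f_equal. unfold cprod. simpl. ring. Qed.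

Lemma cprod_mult l f g : cprod l (fun x => f x * g x) = cprod l f * cprod l g.
Proof. induction l; unfold cprod in *; simpl. ring. rewrite IHl. ring. Qed.

Lemma cprod_ext l f g : (forall x, In x l -> f x = g x) -> cprod l f = cprod l g.
Proof. induction l; intros H; unfold cprod in *; simpl. auto.
  rewrite H by (left; auto). rewrite IHl; auto. intros; apply H; right; auto. Qed.

Lemma cprod_one l : cprod l (fun _ => 1) = 1.
Proof. induction l; unfold cprod in *; simpl. auto. rewrite IHl. ring. Qed.

Lemma cprod_ind N m c : cprod (seq 0 N) (fun l => if Nat.eqb l m then c else 1) = if Nat.ltb m N then c else 1.
Proof. induction N. reflexivity.
  rewrite cprod_S, IHN. destruct (Nat.eqb N m) eqn:E1.
  - apply Nat.eqb_eq in E1. subst. rewrite (proj2 (Nat.ltb_ge m m)) by lia. rewrite (proj2 (Nat.ltb_lt m (S m))) by lia. ring.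
  - apply Nat.eqb_neq in E1. destruct (Nat.ltb m N) eqn:E2.
    + apply Nat.ltb_lt in E2. rewrite (proj2 (Nat.ltb_lt m (S N))) by lia. ring.
    + apply Nat.ltb_ge in E2. rewrite (proj2 (Nat.ltb_ge m (S N))) by lia. ring.
Qed.

Lemma cprod_single N m c f f' : (m < N)%nat ->
  (forall l, (l < N)%nat -> f' l = (if Nat.eqb l m then c else 1) * f l) ->
  cprod (seq 0 N) f' = c * cprod (seq 0 N) f.
Proof. intros Hm H. rewrite (cprod_ext _ f' (fun l => (if Nat.eqb l m then c else 1) * f l)).
  - rewrite cprod_mult, cprod_ind. rewrite (proj2 (Nat.ltb_lt m N)) by lia. auto.
  - intros x Hx. apply in_seq in Hx. apply H. lia.
Qed.

Lemma cprod_cexp l h : cprod l (fun x => cexp (h x)) = cexp (csum l h).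
Proof. induction l; unfold cprod, csum in *; simpl. symmetry; apply cexp_0.
  rewrite IHl, cexp_add. auto. Qed.

Lemma csum_scal l a h : csum l (fun x => a * h x) = a * csum l h.
Proof. induction l; unfold csum in *; simpl. ring. rewrite IHl. ring. Qed.

Lemma csum_S N f : csum (seq 0 (S N)) f = csum (seq 0 N) f + f N.
Proof. rewrite seq_S. unfold csum. rewrite map_app, fold_right_app. simpl.
  rewrite fold_Cplus_acc. ring. Qed.

Lemma csum_shift N m w (z : nat -> C) : (m < N)%nat -> csum (seq 0 N) (Defs.shift m w z) = csum (seq 0 N) z + w.
Proof. intros Hm. induction N. lia.
  rewrite !csum_S. unfold Defs.shift at 2. destruct (Nat.eqb N m) eqn:E.
  - apply Nat.eqb_eq in E. subst.
    assert (csum (seq 0 m) (Defs.shift m w z) = csum (seq 0 m) z).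
    { clear. unfold csum. f_equal. apply map_ext_in. intros a Ha. apply in_seq in Ha. unfold Defs.shift.
      rewrite (proj2 (Nat.eqb_neq a m)) by lia. auto. }
    rewrite H. ring.
  - apply Nat.eqb_neq in E. rewrite IHN by lia. ring.
Qed.

Lemma rsum_S N f : rsum (seq 0 (S N)) f = (rsum (seq 0 N) f + f N)%R.
Proof. rewrite seq_S. unfold rsum. rewrite map_app, fold_right_app. simpl.
  generalize (f N). induction (map f (seq 0 N)); simpl; intros. ring. rewrite IHl. ring. Qed.

Lemma rsum_single N m d f f' : (m < N)%nat ->
  (forall l, (l < N)%nat -> f' l = (f l + if Nat.eqb l m then d else 0)%R) ->
  rsum (seq 0 N) f' = (rsum (seq 0 N) f + d)%R.
Proof. intros Hm H. induction N. lia.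
  rewrite !rsum_S, H by lia. destruct (Nat.eqb N m) eqn:E.
  - apply Nat.eqb_eq in E. subst.
    assert (rsum (seq 0 m) f' = rsum (seq 0 m) f).
    { unfold rsum. f_equal. apply map_ext_in. intros a Ha. apply in_seq in Ha.
      rewrite H by lia. rewrite (proj2 (Nat.eqb_neq a m)) by lia. ring. }
    rewrite H0. ring.
  - apply Nat.eqb_neq in E. rewrite IHN by (auto; lia). ring.
Qed.


Lemma pairprod_S N f : pairprod (S N) f = pairprod N f * cprod (seq 0 N) (fun j => f j N).
Proof. unfold pairprod. rewrite cprod_S. auto. Qed.

Lemma pairprod_mult N f g : pairprod N (fun j k => g j k * f j k) = pairprod N g * pairprod N f.
Proof. unfold pairprod. rewrite <- cprod_mult. apply cprod_ext. intros; apply cprod_mult. Qed.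

Lemma pairprod_ext N f g : (forall j k, (j < k)%nat -> (k < N)%nat -> f j k = g j k) -> pairprod N f = pairprod N g.
Proof. intros H. unfold pairprod. apply cprod_ext. intros k Hk. apply in_seq in Hk.
  apply cprod_ext. intros j Hj. apply in_seq in Hj. apply H; lia. Qed.

Lemma cprod_const n c : cprod (seq 0 n) (fun _ => c) = cpow c n.
Proof. induction n. reflexivity. rewrite cprod_S, IHn. simpl. ring. Qed.

Definition gfun (c : C) (E : nat -> C) (m j k : nat) : C :=
  if Nat.eqb k m then c * E j else if Nat.eqb j m then c * E k else 1.

Lemma pairprod_g c E m N : pairprod N (gfun c E m) =
  if Nat.leb N m then 1 else cpow c (N - 1) * cprod (seq 0 N) (fun o => if Nat.eqb o m then 1 else E o).
Proof. induction N. reflexivity.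
  rewrite pairprod_S, IHN. unfold gfun.
  destruct (lt_eq_lt_dec N m) as [[H|H]|H].
  - rewrite (proj2 (Nat.leb_le N m)) by lia. rewrite (proj2 (Nat.leb_le (S N) m)) by lia.
    rewrite (proj2 (Nat.eqb_neq N m)) by lia.
    rewrite (cprod_ext _ _ (fun _ => 1)). rewrite cprod_one. ring.
    intros x Hx. apply in_seq in Hx. rewrite (proj2 (Nat.eqb_neq x m)) by lia. auto.
  - subst. rewrite (proj2 (Nat.leb_le m m)) by lia. rewrite (proj2 (Nat.leb_gt (S m) m)) by lia.
    rewrite Nat.eqb_refl. rewrite cprod_mult, cprod_const, cprod_S, Nat.eqb_refl.
    replace (S m - 1)%nat with m by lia.
    rewrite (cprod_ext (seq 0 m) (fun o => if Nat.eqb o m then 1 else E o) E). ring.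
    intros x Hx. apply in_seq in Hx. rewrite (proj2 (Nat.eqb_neq x m)) by lia. auto.
  - rewrite (proj2 (Nat.leb_gt N m)) by lia. rewrite (proj2 (Nat.leb_gt (S N) m)) by lia.
    rewrite (cprod_ext _ (fun j => if Nat.eqb N m then c * E j else if Nat.eqb j m then c * E N else 1)
               (fun j => (if Nat.eqb j m then c * E N else 1) * 1)).
    + rewrite cprod_mult, cprod_ind, cprod_one. rewrite (proj2 (Nat.ltb_lt m N)) by lia.
      rewrite cprod_S. rewrite (proj2 (Nat.eqb_neq N m)) by lia.
      replace (S N - 1)%nat with (S (N - 1)) by lia. simpl cpow. ring.
    + intros x Hx. rewrite (proj2 (Nat.eqb_neq N m)) by lia. destruct (Nat.eqb x m); ring.
Qed.

Lemma pairprod_shift N m c E f f' : (m < N)%nat ->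
  (forall j k, (j < k)%nat -> (k < N)%nat -> f' j k = gfun c E m j k * f j k) ->
  pairprod N f' = cpow c (N - 1) * cprod (seq 0 N) (fun o => if Nat.eqb o m then 1 else E o) * pairprod N f.
Proof. intros Hm H. rewrite (pairprod_ext N f' (fun j k => gfun c E m j k * f j k)) by auto.
  rewrite pairprod_mult, pairprod_g. rewrite (proj2 (Nat.leb_gt N m)) by lia. auto. Qed.


Lemma theta1_m1 v tau : (0 < Im tau)%R -> theta1 (v - 1) tau = - theta1 v tau.
Proof. intros Ht. assert (H := theta1_p1 (v - 1) tau Ht). replace (v - 1 + 1) with v in H by ring.
  rewrite H. ring. Qed.

Lemma Im2 tau : (0 < Im tau)%R -> (0 < Im (RtoC 2 * tau))%R.
Proof. destruct tau as [a b]. cunf. intros. lra. Qed.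

Lemma Imhalf tau : (0 < Im tau)%R -> (0 < Im (tau / RtoC 2))%R.
Proof. destruct tau as [a b]. cunf. intros.
  replace (a * (- 0 / (2 * 2 + 0 * 0)) + b * (2 / (2 * 2 + 0 * 0)))%R with (b / 2)%R by field. lra. Qed.

Lemma mm2 A B C' x y : A + B = C' -> (- cexp A * x) * (- cexp B * y) = cexp C' * 1 * (x * y).
Proof. intros <-. rewrite cexp_add. ring. Qed.

Lemma mm1 A B D x : A = B + D -> - cexp A * x = (- cexp B * cexp D) * x.
Proof. intros ->. rewrite cexp_add. ring. Qed.

Lemma cprod_shift_fac N m d (xi : nat -> C) (F : C -> C) c : (m < N)%nat ->
  F (xi m + d) = c * F (xi m) ->
  cprod (seq 0 N) (fun l => F (Defs.shift m d xi l)) = c * cprod (seq 0 N) (fun l => F (xi l)).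
Proof. intros Hm H. apply (cprod_single N m c); auto. intros l Hl. unfold Defs.shift.
  destruct (Nat.eqb l m) eqn:E. apply Nat.eqb_eq in E; subst; auto. ring. Qed.

Lemma P_1 N m xi tau : (0 < Im tau)%R ->
  Pfun N (Defs.shift m 1 xi) tau = Pfun N xi tau.
Proof. intros Ht. unfold Pfun. apply pairprod_ext. intros j k Hjk HkN. unfold Defs.shift.
  destruct (Nat.eqb k m) eqn:Ek, (Nat.eqb j m) eqn:Ej.
  - apply Nat.eqb_eq in Ek, Ej. lia.
  - replace (xi k + 1 - xi j) with ((xi k - xi j) + 1) by ring.
    replace (xi k + 1 + xi j) with ((xi k + xi j) + 1) by ring.
    rewrite !theta1_p1 by auto. ring.
  - replace (xi k - (xi j + 1)) with ((xi k - xi j) - 1) by ring.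
    replace (xi k + (xi j + 1)) with ((xi k + xi j) + 1) by ring.
    rewrite theta1_m1, theta1_p1 by auto. ring.
  - reflexivity.
Qed.

Lemma P_tau N m xi tau : (0 < Im tau)%R -> (m < N)%nat ->
  Pfun N (Defs.shift m tau xi) tau =
  cexp (RtoC (INR (N - 1)) * (RtoC 2 * (- (pi_i * tau) - RtoC 2 * pi_i * xi m))) * Pfun N xi tau.
Proof. intros Ht Hm. unfold Pfun.
  rewrite (pairprod_shift N m (cexp (RtoC 2 * (- (pi_i * tau) - RtoC 2 * pi_i * xi m))) (fun _ => 1) (fun j k => theta1 (xi k - xi j) tau * theta1 (xi k + xi j) tau)); auto.
  - rewrite (cprod_ext _ _ (fun _ => 1)), cprod_one, cpow_cexp. ring.
    intros; destruct (Nat.eqb x m); auto.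
  - intros j k Hjk HkN. unfold gfun, Defs.shift.
    destruct (Nat.eqb k m) eqn:Ek, (Nat.eqb j m) eqn:Ej.
    + apply Nat.eqb_eq in Ek, Ej. lia.
    + apply Nat.eqb_eq in Ek. subst k.
      replace (xi m + tau - xi j) with ((xi m - xi j) + tau) by ring.
      replace (xi m + tau + xi j) with ((xi m + xi j) + tau) by ring.
      rewrite !theta1_tau by auto. apply mm2. ring.
    + apply Nat.eqb_eq in Ej. subst j.
      replace (xi k - (xi m + tau)) with ((xi k - xi m) - tau) by ring.
      replace (xi k + (xi m + tau)) with ((xi k + xi m) + tau) by ring.
      rewrite theta1_mtau, theta1_tau by auto. apply mm2. ring.
    + ring.
Qed.

Lemma A_1 N m xi tau : (0 < Im tau)%R -> (m < N)%nat ->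
  pairprod N (fun j k => theta1 (Defs.shift m 1 xi k - Defs.shift m 1 xi j) tau) =
  cpow (- (1)) (N - 1) * pairprod N (fun j k => theta1 (xi k - xi j) tau).
Proof. intros Ht Hm.
  rewrite (pairprod_shift N m (- (1)) (fun _ => 1) (fun j k => theta1 (xi k - xi j) tau)); auto.
  - rewrite (cprod_ext _ _ (fun _ => 1)), cprod_one. ring.
    intros; destruct (Nat.eqb x m); auto.
  - intros j k Hjk HkN. unfold gfun, Defs.shift.
    destruct (Nat.eqb k m) eqn:Ek, (Nat.eqb j m) eqn:Ej.
    + apply Nat.eqb_eq in Ek, Ej. lia.
    + replace (xi k + 1 - xi j) with ((xi k - xi j) + 1) by ring.
      rewrite theta1_p1 by auto. ring.
    + replace (xi k - (xi j + 1)) with ((xi k - xi j) - 1) by ring.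
      rewrite theta1_m1 by auto. ring.
    + ring.
Qed.

Lemma A_tau N m xi tau : (0 < Im tau)%R -> (m < N)%nat ->
  pairprod N (fun j k => theta1 (Defs.shift m tau xi k - Defs.shift m tau xi j) tau) =
  cpow (- cexp (- (pi_i * tau) - RtoC 2 * pi_i * xi m)) (N - 1) *
  cprod (seq 0 N) (fun o => if Nat.eqb o m then 1 else cexp (RtoC 2 * pi_i * xi o)) *
  pairprod N (fun j k => theta1 (xi k - xi j) tau).
Proof. intros Ht Hm.
  rewrite (pairprod_shift N m (- cexp (- (pi_i * tau) - RtoC 2 * pi_i * xi m)) (fun o => cexp (RtoC 2 * pi_i * xi o)) (fun j k => theta1 (xi k - xi j) tau)); auto.
  intros j k Hjk HkN. unfold gfun, Defs.shift.
  destruct (Nat.eqb k m) eqn:Ek, (Nat.eqb j m) eqn:Ej.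
  + apply Nat.eqb_eq in Ek, Ej. lia.
  + apply Nat.eqb_eq in Ek. subst k.
    replace (xi m + tau - xi j) with ((xi m - xi j) + tau) by ring.
    rewrite theta1_tau by auto. apply mm1. ring.
  + apply Nat.eqb_eq in Ej. subst j.
    replace (xi k - (xi m + tau)) with ((xi k - xi m) - tau) by ring.
    rewrite theta1_mtau by auto. apply mm1. ring.
  + ring.
Qed.


Lemma sgnA N : (1 <= N)%nat -> cpow (- (1)) (N - 1) = sgnL RA N.
Proof. intros HN. destruct N as [|N]. lia. unfold sgnL. rewrite cpow_m1. replace (S N - 1)%nat with N by lia.
  rewrite Nat.even_succ. unfold Nat.odd. destruct (Nat.even N); simpl; rewrite ?RtoC_m1; auto. Qed.

Lemma Wden_1 RS N m xi tau : (0 < Im tau)%R -> (1 <= N)%nat -> (m < N)%nat ->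
  Wden RS N (Defs.shift m 1 xi) tau = sgnL RS N * Wden RS N xi tau.
Proof. intros Ht HN Hm. destruct RS; simpl Wden; simpl sgnL; rewrite ?P_1 by auto.
  - rewrite A_1 by auto. rewrite sgnA by auto. reflexivity.
  - rewrite (cprod_shift_fac N m 1 xi (fun x => theta1 x tau) (- (1))); auto.
    rewrite RtoC_m1; ring. rewrite theta1_p1 by auto. ring.
  - rewrite (cprod_shift_fac N m 1 xi (fun x => theta1 (RtoC 2 * x) (RtoC 2 * tau)) 1); auto.
    ring. replace (RtoC 2 * (xi m + 1)) with ((RtoC 2 * xi m + 1) + 1) by ring.
    rewrite !theta1_p1 by (apply Im2; auto). ring.
  - rewrite (cprod_shift_fac N m 1 xi (fun x => theta1 (RtoC 2 * x) tau) 1); auto.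
    ring. replace (RtoC 2 * (xi m + 1)) with ((RtoC 2 * xi m + 1) + 1) by ring.
    rewrite !theta1_p1 by auto. ring.
  - rewrite (cprod_shift_fac N m 1 xi (fun x => theta1 x (tau / RtoC 2)) (- (1))); auto.
    rewrite RtoC_m1; ring. rewrite theta1_p1 by (apply Imhalf; auto). ring.
  - rewrite (cprod_shift_fac N m 1 xi (fun x => theta1 x tau * theta0 (RtoC 2 * x) (RtoC 2 * tau)) (- (1))); auto.
    rewrite RtoC_m1; ring.
    replace (RtoC 2 * (xi m + 1)) with ((RtoC 2 * xi m + 1) + 1) by ring.
    rewrite !theta0_p1, theta1_p1 by auto. ring.
  - ring.
Qed.

Lemma mq1 A B x : A = B -> - cexp A * x = - cexp B * x.
Proof. intros ->. auto. Qed.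
Lemma mq2 A B C' x : A + B = C' -> - cexp A * (- cexp B * x) = cexp C' * x.
Proof. intros <-. rewrite cexp_add. ring. Qed.
Lemma mq3 A B C' x y : A + B = C' -> - cexp A * x * (- cexp B * y) = cexp C' * (x * y).
Proof. intros <-. rewrite cexp_add. ring. Qed.

Lemma Wden_tau RS N m xi tau : RS <> RA -> (0 < Im tau)%R -> (1 <= N)%nat -> (m < N)%nat ->
  Wden RS N (Defs.shift m tau xi) tau =
  sgniW RS * cexp (RtoC (calN RS N) * (- (pi_i * tau) - RtoC 2 * pi_i * xi m)) * Wden RS N xi tau.
Proof. intros HRS Ht HN Hm.
  set (X := - (pi_i * tau) - RtoC 2 * pi_i * xi m).
  assert (HI : RtoC (INR (N - 1)) = RtoC (INR N) - 1) by (rewrite minus_INR, INR_1, RtoC_minus by lia; auto).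
  destruct RS; simpl Wden; simpl sgniW; rewrite ?P_tau by auto; fold X.
  - congruence.
  - rewrite (cprod_shift_fac N m tau xi (fun x => theta1 x tau) (- cexp X)); auto.
    + replace (cexp (RtoC (calN RB N) * X)) with (cexp X * cexp (RtoC (INR (N - 1)) * (RtoC 2 * X))).
      rewrite ?RtoC_m1. ring.
      rewrite <- cexp_add. f_equal. rewrite HI. unfold calN. repeat (first [rewrite RtoC_plus | rewrite RtoC_mult | rewrite RtoC_minus]). ring.
    + rewrite theta1_tau by auto. reflexivity.
  - rewrite (cprod_shift_fac N m tau xi (fun x => theta1 (RtoC 2 * x) (RtoC 2 * tau)) (- cexp (RtoC 2 * X))); auto.
    + replace (cexp (RtoC (calN RBv N) * X)) with (cexp (RtoC 2 * X) * cexp (RtoC (INR (N - 1)) * (RtoC 2 * X))).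
      rewrite ?RtoC_m1. ring.
      rewrite <- cexp_add. f_equal. rewrite HI. unfold calN. repeat (first [rewrite RtoC_plus | rewrite RtoC_mult | rewrite RtoC_minus]). ring.
    + cbv beta. replace (RtoC 2 * (xi m + tau)) with (RtoC 2 * xi m + RtoC 2 * tau) by ring.
      rewrite theta1_tau by (apply Im2; auto). apply mq1. unfold X. ring.
  - rewrite (cprod_shift_fac N m tau xi (fun x => theta1 (RtoC 2 * x) tau) (cexp (RtoC 4 * X))); auto.
    + replace (cexp (RtoC (calN RC N) * X)) with (cexp (RtoC 4 * X) * cexp (RtoC (INR (N - 1)) * (RtoC 2 * X))).
      rewrite ?RtoC_m1. ring.
      rewrite <- cexp_add. f_equal. rewrite HI. unfold calN. repeat (first [rewrite RtoC_plus | rewrite RtoC_mult | rewrite RtoC_minus]). ring.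
    + cbv beta. replace (RtoC 2 * (xi m + tau)) with ((RtoC 2 * xi m + tau) + tau) by ring.
      rewrite !theta1_tau by auto. apply mq2. unfold X. ring.
  - rewrite (cprod_shift_fac N m tau xi (fun x => theta1 x (tau / RtoC 2)) (cexp (RtoC 2 * X))); auto.
    + replace (cexp (RtoC (calN RCv N) * X)) with (cexp (RtoC 2 * X) * cexp (RtoC (INR (N - 1)) * (RtoC 2 * X))).
      ring.
      rewrite <- cexp_add. f_equal. rewrite HI. unfold calN. repeat (first [rewrite RtoC_plus | rewrite RtoC_mult | rewrite RtoC_minus]). ring.
    + cbv beta. replace (xi m + tau) with ((xi m + tau / RtoC 2) + tau / RtoC 2) by (field; try (cunf; intros H; injection H; lra)).
      rewrite !theta1_tau by (apply Imhalf; auto). apply mq2. unfold X. field; try (cunf; intros H; injection H; lra).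
  - rewrite (cprod_shift_fac N m tau xi (fun x => theta1 x tau * theta0 (RtoC 2 * x) (RtoC 2 * tau)) (cexp (RtoC 3 * X))); auto.
    + replace (cexp (RtoC (calN RBC N) * X)) with (cexp (RtoC 3 * X) * cexp (RtoC (INR (N - 1)) * (RtoC 2 * X))).
      ring.
      rewrite <- cexp_add. f_equal. rewrite HI. unfold calN. repeat (first [rewrite RtoC_plus | rewrite RtoC_mult | rewrite RtoC_minus]). ring.
    + cbv beta. replace (RtoC 2 * (xi m + tau)) with (RtoC 2 * xi m + RtoC 2 * tau) by ring.
      rewrite theta1_tau, theta0_tau by (try apply Im2; auto). apply mq3. unfold X. ring.
  - replace (cexp (RtoC (calN RD N) * X)) with (cexp (RtoC (INR (N - 1)) * (RtoC 2 * X))).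
    ring. f_equal. rewrite HI. unfold calN. repeat (first [rewrite RtoC_plus | rewrite RtoC_mult | rewrite RtoC_minus]). ring.
Qed.


Lemma even_pred N : (1 <= N)%nat -> Nat.even (N - 1) = negb (Nat.even N).
Proof. intros HN. destruct N as [|N]. lia. replace (S N - 1)%nat with N by lia.
  rewrite Nat.even_succ. unfold Nat.odd. destruct (Nat.even N); auto. Qed.

Definition ThA (N : nat) (v tau : C) : C := if Nat.even N then theta0 v tau else theta3 v tau.

Lemma A_comb N m xi tau : (0 < Im tau)%R -> (1 <= N)%nat -> (m < N)%nat ->
  ThA N (csum (seq 0 N) xi + tau) tau * Wden RA N (Defs.shift m tau xi) tau =
  cexp (RtoC (INR N) * (- (pi_i * tau) - RtoC 2 * pi_i * xi m)) * (ThA N (csum (seq 0 N) xi) tau * Wden RA N xi tau).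
Proof. intros Ht HN Hm.
  set (S := csum (seq 0 N) xi).
  set (X := - (pi_i * tau) - RtoC 2 * pi_i * xi m).
  set (Pi' := cprod (seq 0 N) (fun o => if Nat.eqb o m then 1 else cexp (RtoC 2 * pi_i * xi o))).
  assert (HS : cexp (RtoC 2 * pi_i * S) = cexp (RtoC 2 * pi_i * xi m) * Pi').
  { unfold S. rewrite <- csum_scal, <- cprod_cexp. apply (cprod_single N m); auto.
    intros l Hl. destruct (Nat.eqb l m) eqn:E. apply Nat.eqb_eq in E; subst; ring. ring. }
  assert (HP : Pi' = cexp (RtoC 2 * pi_i * S) * cexp (- (RtoC 2 * pi_i * xi m))).
  { rewrite HS. transitivity (Pi' * (cexp (- (RtoC 2 * pi_i * xi m)) * cexp (RtoC 2 * pi_i * xi m))).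
    rewrite cexp_opp; ring. ring. }
  assert (HI : RtoC (INR (N - 1)) = RtoC (INR N) - 1) by (rewrite minus_INR, INR_1, RtoC_minus by lia; auto).
  unfold Wden. rewrite A_tau by auto. fold X. fold Pi'. rewrite HP.
  replace (- cexp X) with (- (1) * cexp X) by ring.
  rewrite cpow_mult, cpow_m1, cpow_cexp, even_pred by auto.
  replace (cexp (RtoC (INR N) * X)) with
    (cexp ((- (pi_i * tau) - RtoC 2 * pi_i * S) + RtoC (INR (N - 1)) * X + RtoC 2 * pi_i * S + - (RtoC 2 * pi_i * xi m))).
  - rewrite !cexp_add. unfold ThA. destruct (Nat.even N); simpl negb; cbv iota.
    + rewrite theta0_tau by auto. ring.
    + rewrite theta3_tau by auto. ring.
  - f_equal. rewrite HI. unfold X. ring.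
Qed.

Lemma final_exp (L W n : R) (x : C) : (0 < L)%R -> (0 < W)%R ->
  RtoC (exp (- (PI * n / (L * W)) * (2 * Im x * W + W ^ 2))%R) *
  cexp (RtoC n * (- (pi_i * (0%R, (W / L)%R)) - RtoC 2 * pi_i * (x / RtoC L))) =
  cexp (RtoC (- (2 * PI * n * Re x / L)) * Ci).
Proof. intros HL HW. rewrite <- cexp_R, <- cexp_add. f_equal.
  destruct x as [a b]. cunf. apply injective_projections; simpl; field; lra. Qed.

Lemma gauss_L N m L (z : nat -> C) : (m < N)%nat ->
  (rsum (seq 0 N) (fun j => Im (Defs.shift m (RtoC L) z j) ^ 2) = rsum (seq 0 N) (fun j => Im (z j) ^ 2))%R.
Proof. intros Hm. f_equal. apply functional_extensionality. intros j. unfold Defs.shift.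
  destruct (Nat.eqb j m); auto. f_equal. destruct (z j). cunf. ring. Qed.

Lemma gauss_W N m W (z : nat -> C) : (m < N)%nat ->
  (rsum (seq 0 N) (fun j => Im (Defs.shift m (0%R, W) z j) ^ 2) =
  rsum (seq 0 N) (fun j => Im (z j) ^ 2) + (2 * Im (z m) * W + W ^ 2))%R.
Proof. intros Hm. apply (rsum_single N m); auto. intros l Hl. unfold Defs.shift.
  destruct (Nat.eqb l m) eqn:E.
  - apply Nat.eqb_eq in E. subst. destruct (z m). cunf. ring.
  - ring.
Qed.

Lemma Cfac_nonA RS N L W z tau : RS <> RA ->
  Cfac RS N L W z tau = RtoC (exp (- (PI * calN RS N / (L * W)) * rsum (seq 0 N) (fun j => Im (z j) ^ 2))%R).
Proof. intros H. destruct RS; try congruence; reflexivity. Qed.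

Lemma Cfac_A N L W z tau :
  Cfac RA N L W z tau = RtoC (exp (- (PI * calN RA N / (L * W)) * rsum (seq 0 N) (fun j => Im (z j) ^ 2))%R)
    * ThA N (csum (seq 0 N) z / RtoC L) tau.
Proof. reflexivity. Qed.

Lemma csum_div N (z : nat -> C) L : csum (seq 0 N) z / L = csum (seq 0 N) (fun j => z j / L).
Proof. unfold Cdiv. rewrite Cmult_comm, <- csum_scal. unfold csum. f_equal. apply map_ext. intros; ring. Qed.

Open Scope R_scope.
Theorem lemma2p1 (L W : R) (N : nat) (RS : RootSys) (z : nat -> C) (m : nat) :
  0 < L -> 0 < W -> (1 <= N)%nat -> (m < N)%nat ->
  (qfun RS N L W (Defs.shift m (RtoC L) z) = sgnL RS N * qfun RS N L W z)%C /\
  (qfun RS N L W (Defs.shift m (0, W) z) =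
    sgniW RS * cexp (RtoC (- (2 * PI * calN RS N * Re (z m) / L)) * Ci)
      * qfun RS N L W z)%C.
Proof.
  Open Scope C_scope.
  intros HL HW HN Hm.
  assert (HLc : RtoC L <> 0) by (cunf; intros H; injection H; lra).
  set (tau := (0%R, (W / L)%R) : C).
  assert (Ht : (0 < Im tau)%R) by (unfold tau; simpl; apply Rdiv_lt_0_compat; auto).
  set (xi := fun j => z j / RtoC L).
  assert (E1 : (fun j => Defs.shift m (RtoC L) z j / RtoC L) = Defs.shift m 1 xi).
  { apply functional_extensionality. intros j. unfold Defs.shift, xi. destruct (Nat.eqb j m); field; auto. }
  assert (E2 : (fun j => Defs.shift m (0%R, W) z j / RtoC L) = Defs.shift m tau xi).
  { apply functional_extensionality. intros j. unfold Defs.shift, xi. destruct (Nat.eqb j m).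
    - unfold tau. destruct (z j). cunf. apply injective_projections; simpl; field; lra.
    - auto. }
  unfold qfun. fold tau. rewrite E1, E2. fold xi.
  split.
  - rewrite Wden_1 by auto.
    destruct (RS) eqn:ERS.
    + rewrite !Cfac_A, gauss_L by auto. rewrite csum_shift by auto.
      replace ((csum (seq 0 N) z + RtoC L) / RtoC L) with (csum (seq 0 N) z / RtoC L + 1) by (field; auto).
      unfold ThA. destruct (Nat.even N); rewrite ?theta0_p1, ?theta3_p1; ring.
    + rewrite !Cfac_nonA, gauss_L by (auto; congruence). ring.
    + rewrite !Cfac_nonA, gauss_L by (auto; congruence). ring.
    + rewrite !Cfac_nonA, gauss_L by (auto; congruence). ring.
    + rewrite !Cfac_nonA, gauss_L by (auto; congruence). ring.
    + rewrite !Cfac_nonA, gauss_L by (auto; congruence). ring.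
    + rewrite !Cfac_nonA, gauss_L by (auto; congruence). ring.
  - destruct (RS) eqn:ERS.
    + rewrite !Cfac_A, gauss_W by auto. rewrite csum_shift by auto.
      replace ((csum (seq 0 N) z + (0%R, W)) / RtoC L) with (csum (seq 0 N) xi + tau).
      2:{ unfold xi. rewrite <- csum_div. unfold tau. destruct (csum (seq 0 N) z). cunf. apply injective_projections; simpl; field; lra. }
      idtac.
      rewrite Rmult_plus_distr_l, exp_plus, RtoC_mult.
      transitivity (RtoC (exp (- (PI * calN RA N / (L * W)) * rsum (seq 0 N) (fun j => Im (z j) ^ 2))%R) *
        RtoC (exp (- (PI * calN RA N / (L * W)) * (2 * Im (z m) * W + W ^ 2))%R) *
        (ThA N (csum (seq 0 N) xi + tau) tau * Wden RA N (Defs.shift m tau xi) tau)). ring.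
      rewrite A_comb by auto.
      rewrite <- (final_exp L W (calN RA N) (z m)) by auto. simpl sgniW. unfold calN. rewrite (csum_div N z (RtoC L)). fold xi. change (z m / RtoC L) with (xi m). fold tau. ring.
    all: rewrite Wden_tau by (auto; congruence); rewrite !Cfac_nonA by congruence; rewrite gauss_W by auto;
      rewrite Rmult_plus_distr_l, exp_plus, RtoC_mult;
      rewrite <- (final_exp L W (calN _ N) (z m)) by auto;
      change (z m / RtoC L) with (xi m); fold tau; ring.
Qed.
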